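(* Let $F$ be an infinite field of characteristic $p>2$ and $k$ a positive integer. Let $l_1,\dots,l_k\in\mathbb{N}_0$ and let $x^i_1,\dots,x^i_{l_i}$ ($i=1,\dots,k$) be distinct variables, $x^i_t$ of degree $i$. Consider the graded monomial $T=(x^1_1)^{r^1_1}\cdots(x^1_{l_1})^{r^1_{l_1}}\cdots(x^k_1)^{r^k_1}\cdots(x^k_{l_k})^{r^k_{l_k}}$ with non-negative integer exponents satisfying $\sum_{i=1}^k i\,(r^i_1+\cdots+r^i_{l_i})\le k$. Let $r=\max\{r^i_t\}$ and suppose $p>r$. Then $T$ is not a $\mathbb{Z}$-graded identity of $E^{k^\ast}$.
   Context: $L$ is a vector space over $F$ with basis $e_1,e_2,\dots$, $E$ its unital Grassmann algebra (basis $1$ and $e_{i_1}\cdots e_{i_k}$, $i_1<\cdots<i_k$, with $e_ie_j=-e_je_i$). $E^{k^\ast}$ is $E$ with the $\mathbb{Z}$-grading induced by $\|e_i\|=1$ for $i\le k$, $\|e_i\|=0$ for $i>k$ (basis monomials get the sum of degrees of their factors; $1$ has degree $0$). A graded polynomial is a graded identity of $A$ if it vanishes whenever each variable is replaced by an element of the homogeneous component of $A$ of that variable's degree. *)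

(* Defs.v *)
From HB Require Import structures.
From mathcomp Require Import all_boot all_order all_algebra.
From mathcomp Require Import finmap.
Set Implicit Arguments. Unset Strict Implicit. Unset Printing Implicit Defensive.
Import Order.TTheory GRing.Theory Num.Theory.
Local Open Scope fset_scope.
Local Open Scope ring_scope.

(* Unital Grassmann algebra E over F on generators e_1, e_2, ...
   Convention: generator e_(j+1) is indexed by j : nat (0-based).
   A basis monomial e_{i_1}...e_{i_m} (i_1<...<i_m) is indexed by the finite
   set {i_1-1,...,i_m-1} : {fset nat}; 1 is indexed by fset0.
   An element of E is its coefficient function (with finite support, see
   [grass_fin]). *)
Definition grass (F : fieldType) := {fset nat} -> F.

(* number of inversions between A and B: #{(a,b) in A x B | a > b};
   e_A * e_B = (-1)^(inv_count A B) e_(A u B) when A, B disjoint. *)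
Definition inv_count (A B : {fset nat}) : nat :=
  (\sum_(a <- A) \sum_(b <- B) (b < a))%N.

Definition grass_mul (F : fieldType) (x y : grass F) : grass F :=
  fun S => \sum_(A <- fpowerset S)
     (-1) ^+ inv_count A (S `\` A) * x A * y (S `\` A).

Definition grass_one (F : fieldType) : grass F :=
  fun S => if S == fset0 then 1 else 0.

Definition grass_zero (F : fieldType) : grass F := fun _ => 0.

(* finitely supported coefficient functions = genuine elements of E *)
Definition grass_fin (F : fieldType) (x : grass F) : Prop :=
  exists s : seq {fset nat}, forall S, x S != 0 -> S \in s.

(* Z-grading of E^{k*}: ||e_j|| = 1 for j <= k, 0 for j > k;
   with 0-based indices: index j has degree 1 iff j < k. *)
Definition kdeg (k : nat) (S : {fset nat}) : nat :=
  #|` [fset j in S | (j < k)%N] |.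

Definition grass_hom (F : fieldType) (k d : nat) (x : grass F) : Prop :=
  grass_fin x /\ forall S, x S != 0 -> kdeg k S = d.

Definition grass_prod (F : fieldType) (xs : seq (grass F)) : grass F :=
  foldr (@grass_mul F) (@grass_one F) xs.

(* Value of the monomial
   T = (x^1_1)^{r^1_1} ... (x^1_{l_1})^{r^1_{l_1}} ... (x^k_1)^{r^k_1} ... (x^k_{l_k})^{r^k_{l_k}}
   under the substitution x^i_{t+1} := v i t  (t 0-based, 1 <= i <= k). *)
Definition eval_monomial (F : fieldType) (k : nat) (l : nat -> nat)
    (r : nat -> nat -> nat) (v : nat -> nat -> grass F) : grass F :=
  grass_prod (flatten [seq flatten [seq nseq (r i t) (v i t) | t <- iota 0 (l i)]
                      | i <- iota 1 k]).

(* Main.v *)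
Require Import Defs.
From HB Require Import structures.
From mathcomp Require Import all_boot all_order all_algebra.
From mathcomp Require Import finmap zify.
Import Order.TTheory GRing.Theory Num.Theory.
Set Implicit Arguments. Unset Strict Implicit. Unset Printing Implicit Defensive.
Local Open Scope fset_scope.
Local Open Scope ring_scope.

Definition vv (F : fieldType) N (lab : nat -> nat * nat) (B : nat -> {fset nat})
  (g : nat * nat) : grass F :=
  fun S => \sum_(a <- iota 0 N | lab a == g) (S == B a)%:R.

Lemma mul_vv (F : fieldType) N lab B g (P : grass F) S :
  grass_mul (vv F N lab B g) P S =
  \sum_(a <- iota 0 N | lab a == g)
     (if B a `<=` S then (-1) ^+ inv_count (B a) (S `\` B a) * P (S `\` B a) else 0).
Proof.
rewrite /grass_mul /vv.
under eq_bigr => A _ do rewrite mulr_sumr mulr_suml.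
rewrite exchange_big /=; apply: eq_bigr => a _.
case: ifP => hB.
  have hin : B a \in fpowerset S by rewrite fpowersetE.
  rewrite (bigD1_seq (B a)) ?fset_uniq //= eqxx mulr1 big1 ?addr0 //.
  by move=> A /negbTE ->; rewrite mulr0 mul0r.
rewrite big_seq big1 // => A; rewrite fpowersetE => hA.
by case: eqP => [e|_]; [rewrite -e hA in hB | rewrite mulr0 mul0r].
Qed.

Local Close Scope ring_scope.

Definition disjB N (B : nat -> {fset nat}) := forall a b x, (a < N)%N -> (b < N)%N ->
  a != b -> x \in B a -> x \in B b -> False.
Definition neB N (B : nat -> {fset nat}) := forall a, (a < N)%N -> exists x, x \in B a.
Definition coverP N (B : nat -> {fset nat}) (V : {fset nat}) :=
  forall x, x \in V -> exists a, (a < N)%N /\ B a `<=` V /\ x \in B a.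

Lemma sub_diff N B V a b : disjB N B -> (a < N)%N -> (b < N)%N -> b != a ->
  (B b `<=` V `\` B a) = (B b `<=` V).
Proof.
move=> hd ha hb hba; apply/fsubsetP/fsubsetP => h x hx.
  by have := h x hx; rewrite in_fsetD => /andP[].
rewrite in_fsetD h // andbT; apply/negP => hxa.
exact: (hd b a x hb ha hba hx hxa).
Qed.

Lemma self_diff N B V a : neB N B -> (a < N)%N -> (B a `<=` V `\` B a) = false.
Proof.
move=> hn ha; apply/negP => /fsubsetP h.
have [x hx] := hn a ha; have := h x hx; by rewrite in_fsetD hx.
Qed.

Lemma sum_cover N B (X : {fset nat}) (f : nat -> nat) : disjB N B -> coverP N B X ->
  \sum_(y <- X) f y = \sum_(b <- iota 0 N | B b `<=` X) \sum_(y <- B b) f y.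
Proof.
move=> hd hc.
transitivity (\sum_(b <- iota 0 N | B b `<=` X) \sum_(y <- X) ((y \in B b) * f y)%N); last first.
  apply: eq_bigr => b hb.
  rewrite -(@big_fset_incl _ _ _ _ (B b) X) //; last first.
    by move=> x _ /negbTE ->.
  by rewrite [RHS]big_seq_cond [LHS]big_seq_cond; apply: eq_bigr => y /andP[-> _]; rewrite mul1n.
rewrite exchange_big /= [RHS]big_seq_cond [LHS]big_seq_cond; apply: eq_bigr => y /andP[hy _].
have [b0 [hb0 [hsub hyb]]] := hc y hy.
rewrite big_mkcond (bigD1_seq b0) ?iota_uniq ?mem_iota //= hsub hyb mul1n.
rewrite big_seq_cond big1 ?addn0 // => b /andP[hbN hb]; case: ifP => // _.
case hyB: (y \in B b) => //.
exfalso; apply: (hd b b0 y) => //.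
by rewrite mem_iota in hbN.
Qed.

Definition invEven N (B : nat -> {fset nat}) := forall a b, (a < N)%N -> (b < N)%N ->
  a != b -> ~~ odd (inv_count (B a) (B b)).

Lemma inv_cover N B V a : disjB N B -> neB N B -> invEven N B -> (a < N)%N ->
  coverP N B (V `\` B a) -> ~~ odd (inv_count (B a) (V `\` B a)).
Proof.
move=> hd hn hi ha hc; rewrite /inv_count exchange_big /=.
rewrite (sum_cover (fun y => \sum_(i <- B a) (y < i))%N hd hc).
rewrite big_seq_cond; apply: (big_ind (fun n => ~~ odd n)) => //.
  by move=> x y hx hy; rewrite oddD (negbTE hx) (negbTE hy).
move=> b /andP[hb hsub]; rewrite mem_iota /= in hb.
rewrite exchange_big /=; apply: hi => //.
by apply/eqP => e; subst b; rewrite (self_diff _ hn ha) in hsub.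
Qed.


Definition cnt N (lab : nat -> nat * nat) (B : nat -> {fset nat}) g V :=
  (\sum_(b <- iota 0 N) ((lab b == g) && (B b `<=` V)))%N.

Definition valid N lab B V (hs : seq (nat * nat)) :=
  coverP N B V /\ forall g, cnt N lab B g V = count_mem g hs.

Fixpoint Kc (F : fieldType) (hs : seq (nat * nat)) : F :=
  match hs with [::] => 1%R | h :: t => ((count_mem h hs)%:R * Kc F t)%R end.

Lemma cntD N lab B V a g : disjB N B -> neB N B -> (a < N)%N -> B a `<=` V ->
  (cnt N lab B g (V `\` B a) + (lab a == g) = cnt N lab B g V)%N.
Proof.
move=> hd hn ha hs; rewrite /cnt.
rewrite (bigD1_seq a) ?iota_uniq ?mem_iota //= (self_diff _ hn ha) andbF add0n.
rewrite [in RHS](bigD1_seq a) ?iota_uniq ?mem_iota //= hs andbT addnC; congr (_ + _)%N.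
rewrite big_seq_cond [RHS]big_seq_cond; apply: eq_bigr => b /andP[hb hba].
by rewrite mem_iota in hb; rewrite (sub_diff _ hd ha).
Qed.

Lemma valid_down N lab B V a hs : disjB N B -> neB N B -> (a < N)%N -> B a `<=` V ->
  valid N lab B V (lab a :: hs) -> valid N lab B (V `\` B a) hs.
Proof.
move=> hd hn ha hsV [hc hcnt]; split.
  move=> x; rewrite in_fsetD => /andP[hxa hxV].
  have [b [hb [hbV hxb]]] := hc x hxV; exists b; split => //; split => //.
  have hba : b != a by apply: contraNneq hxa => <-.
  by rewrite (sub_diff _ hd ha).
move=> g; have := cntD lab g hd hn ha hsV; rewrite hcnt /= => e.
by apply/eqP; rewrite -(eqn_add2r (lab a == g)) e addnC eq_sym.
Qed.

Lemma valid_up N lab B V a hs : disjB N B -> neB N B -> (a < N)%N -> B a `<=` V ->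
  valid N lab B (V `\` B a) hs -> valid N lab B V (lab a :: hs).
Proof.
move=> hd hn ha hsV [hc hcnt]; split.
  move=> x hx; case hxa: (x \in B a); first by exists a.
  have [b [hb [hbV hxb]]] : exists b, (b < N)%N /\ B b `<=` V `\` B a /\ x \in B b.
    by apply: hc; rewrite in_fsetD hxa.
  exists b; split => //; split => //.
  by apply: fsubset_trans hbV (fsubsetDl _ _).
move=> g; rewrite -(cntD lab g hd hn ha hsV) hcnt /= addnC eq_sym.
by [].
Qed.

Lemma valid_nil N lab B V : disjB N B -> neB N B -> valid N lab B V [::] <-> V = fset0.
Proof.
move=> hd hn; split.
  move=> [hc hcnt]; apply/fsetP => x; rewrite in_fset0; apply/negP => hx.
  have [a [ha [haV hxa]]] := hc x hx.
  have := cntD lab (lab a) hd hn ha haV; rewrite hcnt eqxx /=.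
  by rewrite addn1.
move=> ->; split; first by move=> x; rewrite in_fset0.
move=> g; rewrite /cnt /= big_seq big1 // => b; rewrite mem_iota /= => hb.
have [x hx] := hn b hb.
suff -> : (B b `<=` fset0) = false by rewrite andbF.
by apply/negbTE/fsubsetPn; exists x; rewrite ?in_fset0.
Qed.

Lemma main_coef (F : fieldType) N lab B : disjB N B -> neB N B -> invEven N B ->
  forall hs V,
   (valid N lab B V hs -> grass_prod (map (vv F N lab B) hs) V = Kc F hs) /\
   (~ valid N lab B V hs -> grass_prod (map (vv F N lab B) hs) V = 0%R).
Proof.
move=> hd hn hi; elim => [|h hs IH] V.
  rewrite /= /grass_one; split.
    by move/(valid_nil lab V hd hn) => ->; rewrite eqxx.
  move=> hnv; case: eqP => // e; exfalso; apply: hnv.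
  by apply/(valid_nil lab V hd hn).
rewrite /= mul_vv; split.
  move=> hv.
  transitivity (\sum_(a <- iota 0 N) (((lab a == h) && (B a `<=` V))%:R * Kc F hs))%R.
    rewrite big_mkcond /=; rewrite big_seq [RHS]big_seq; apply: eq_bigr => a.
    rewrite mem_iota /= => ha.
    case: eqP => [e|_]; last by rewrite mul0r.
    case: ifP => hsub; last by rewrite mul0r.
    rewrite mul1r.
    have hv' : valid N lab B (V `\` B a) hs by apply: valid_down => //; rewrite e.
    rewrite (proj1 (IH _) hv') -signr_odd.
    by rewrite (negbTE (inv_cover hd hn hi ha (proj1 hv'))) expr0 mul1r.
  rewrite -mulr_suml -natr_sum; congr (_ * _)%R.
  by have := proj2 hv h; rewrite /cnt => ->.
move=> hnv; rewrite big_seq_cond big1 // => a /andP[]; rewrite mem_iota /= => ha /eqP e.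
case: ifP => hsub //.
rewrite (proj2 (IH _)) ?mulr0 // => hv'; apply: hnv; rewrite -e.
exact: valid_up.
Qed.


Definition sinv (u w : seq nat) := (\sum_(x <- u) \sum_(y <- w) (y < x))%N.

Lemma sinv_catl u1 u2 w : sinv (u1 ++ u2) w = (sinv u1 w + sinv u2 w)%N.
Proof. by rewrite /sinv big_cat. Qed.

Lemma sinv_catr u w1 w2 : sinv u (w1 ++ w2) = (sinv u w1 + sinv u w2)%N.
Proof. by rewrite /sinv -big_split /=; apply: eq_bigr => x _; rewrite big_cat. Qed.

Lemma sinv_lt u w : (forall x y, x \in u -> y \in w -> x < y) -> sinv u w = 0%N.
Proof.
move=> h; rewrite /sinv big_seq big1 // => x hx; rewrite big_seq big1 // => y hy.
by rewrite ltnNge ltnW // h.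
Qed.

Lemma sinv_gt u w : (forall x y, x \in u -> y \in w -> y < x) -> sinv u w = (size u * size w)%N.
Proof.
move=> h; rewrite /sinv.
transitivity (\sum_(x <- u) size w)%N.
  apply: eq_big_seq => x hx.
  by rewrite -sum1_size; apply: eq_big_seq => y hy; rewrite h.
by elim: u {h} => [|x u IH]; rewrite ?big_nil ?big_cons ?IH //= mulSn.
Qed.

Lemma inv_seq (u w : seq nat) : uniq u -> uniq w ->
  inv_count (seq_fset tt u) (seq_fset tt w) = sinv u w.
Proof.
move=> hu hw; rewrite /inv_count (perm_big _ (seq_fset_perm tt u)) undup_id //.
by apply: eq_bigr => x _; rewrite (perm_big _ (seq_fset_perm tt w)) undup_id.
Qed.

Definition sp (d : nat -> nat) a := (\sum_(0 <= b < a) d b)%N.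
Definition Lseq d a := iota (sp d a) (d a).
Definition Hseq k N (d : nat -> nat) a := if odd (d a) then [:: (k + N - a)%N] else [::].
Definition Bk k N d a := seq_fset tt (Lseq d a ++ Hseq k N d a).

Lemma sp_le d a b : (a < b)%N -> (sp d a + d a <= sp d b)%N.
Proof.
move=> hab; rewrite /sp [X in (_ <= X)%N](@big_cat_nat _ _ _ a.+1) //=.
by rewrite big_nat_recr //= leq_addr.
Qed.

Lemma mem_Bk k N d a x : (x \in Bk k N d a) =
  ((sp d a <= x < sp d a + d a) || (odd (d a) && (x == k + N - a)))%N.
Proof.
rewrite /Bk seq_fsetE mem_cat /Lseq mem_iota /Hseq; congr (_ || _).
by case: (odd (d a)); rewrite ?inE.
Qed.

Lemma Bk_bound k N d a : (sp d N <= k)%N -> (a < N)%N -> (sp d a + d a <= k)%N.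
Proof. by move=> ht ha; apply: leq_trans (sp_le d ha) ht. Qed.

Lemma disj_Bk k N d : (sp d N <= k)%N -> disjB N (Bk k N d).
Proof.
move=> ht a b x ha hb hab; rewrite !mem_Bk.
have h1 := Bk_bound ht ha; have h2 := Bk_bound ht hb.
have hs : (a < b -> sp d a + d a <= sp d b)%N /\ (b < a -> sp d b + d b <= sp d a)%N.
  by split; apply: sp_le.
case: hs => hs1 hs2.
case/orP => [/andP[x1 x2]|/andP[_ /eqP x1]]; case/orP => [/andP[y1 y2]|/andP[_ /eqP y1]].
- case: (ltngtP a b) => [l|l|e]; [have := hs1 l|have := hs2 l|by rewrite e eqxx in hab]; lia.
- lia.
- lia.
- move/negP: hab; apply; apply/eqP; lia.
Qed.

Lemma ne_Bk k N d : (forall a, (a < N)%N -> (0 < d a)%N) -> neB N (Bk k N d).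
Proof.
move=> hd a ha; exists (sp d a); rewrite mem_Bk leqnn /= -[X in (X < _)%N]addn0 ltn_add2l.
by rewrite hd.
Qed.

Lemma inv_Bk k N d : (sp d N <= k)%N -> invEven N (Bk k N d).
Proof.
move=> ht a b ha hb hab.
have h1 := Bk_bound ht ha; have h2 := Bk_bound ht hb.
rewrite /Bk inv_seq; last first.
- rewrite cat_uniq iota_uniq /Hseq; case: (odd (d b)) => //=; rewrite andbT mem_iota; apply/negP; lia.
- rewrite cat_uniq iota_uniq /Hseq; case: (odd (d a)) => //=; rewrite andbT mem_iota; lia.
rewrite !sinv_catl !sinv_catr.
have hH : forall c, size (Hseq k N d c) = odd (d c) by move=> c; rewrite /Hseq; case: odd.
have mH : forall c y, y \in Hseq k N d c -> y = (k + N - c)%N.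
  by move=> c y; rewrite /Hseq; case: odd; rewrite ?inE // => /eqP.
case: (ltngtP a b) => [l|l|e]; last by rewrite e eqxx in hab.
- have hs := sp_le d l.
  rewrite (@sinv_lt (Lseq d a) (Lseq d b)); last by move=> x y; rewrite !mem_iota; lia.
  rewrite (@sinv_lt (Lseq d a) (Hseq k N d b)); last by move=> x y; rewrite mem_iota => hx /mH ->; lia.
  rewrite (@sinv_gt (Hseq k N d a) (Lseq d b)); last by move=> x y /mH -> ; rewrite mem_iota; lia.
  rewrite (@sinv_gt (Hseq k N d a) (Hseq k N d b)); last by move=> x y /mH -> /mH ->; lia.
  rewrite !hH !size_iota add0n -mulnDr oddM oddD.
  by case: (odd (d a)); case: (odd (d b)).
- have hs := sp_le d l.
  rewrite (@sinv_gt (Lseq d a) (Lseq d b)); last by move=> x y; rewrite !mem_iota; lia.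
  rewrite (@sinv_lt (Lseq d a) (Hseq k N d b)); last by move=> x y; rewrite mem_iota => hx /mH ->; lia.
  rewrite (@sinv_gt (Hseq k N d a) (Lseq d b)); last by move=> x y /mH -> ; rewrite mem_iota; lia.
  rewrite (@sinv_lt (Hseq k N d a) (Hseq k N d b)); last by move=> x y /mH -> /mH ->; lia.
  rewrite !hH !size_iota addn0 oddD !oddM addn0 oddM.
  by case: (odd (d a)); case: (odd (d b)); rewrite ?andbF.
Qed.


Definition gsl k (l : nat -> nat) (r : nat -> nat -> nat) : seq (nat * nat) :=
  flatten [seq flatten [seq nseq (r i t) (i, t) | t <- iota 0 (l i)] | i <- iota 1 k].

Lemma mem_gs k l r i t : (i, t) \in gsl k l r -> (1 <= i <= k)%N /\ (t < l i)%N.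
Proof.
case/flattenP => s /mapP[i' hi' ->] /flattenP[s' /mapP[t' ht' ->]].
move/nseqP => [[-> ->] _]; move: hi' ht'; rewrite !mem_iota; lia.
Qed.

Lemma count_gs k l r i t : (1 <= i <= k)%N -> (t < l i)%N ->
  count_mem (i, t) (gsl k l r) = r i t.
Proof.
move=> hi ht; rewrite /gsl count_flatten sumnE !big_map.
rewrite (bigD1_seq i) ?iota_uniq ?mem_iota /=; last by lia.
rewrite big1 ?addn0; last first.
  move=> i' hi'; rewrite count_flatten sumnE !big_map big1 // => t' _.
  by rewrite /= count_nseq /= xpair_eqE (negbTE hi').
rewrite count_flatten sumnE !big_map.
rewrite (bigD1_seq t) ?iota_uniq ?mem_iota //= count_nseq /= eqxx mul1n.
rewrite big1 ?addn0 // => t' ht'.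
  by rewrite count_nseq /= xpair_eqE eqxx /= (negbTE ht').
lia.
Qed.

Lemma sum_gs k l r : (\sum_(x <- gsl k l r) x.1 =
   \sum_(1 <= i < k.+1) i * \sum_(0 <= t < l i) r i t)%N.
Proof.
rewrite /gsl big_flatten big_map /index_iota subSS subn0 /=.
apply: eq_bigr => i _; rewrite big_flatten big_map big_distrr /=.
rewrite subn0; apply: eq_bigr => t _; by rewrite big_nseq iter_addn_0.
Qed.


Lemma vv_supp (F : fieldType) N lab B g S : vv F N lab B g S != 0%R ->
  exists a, (a < N)%N /\ lab a = g /\ S = B a.
Proof.
rewrite /vv; case: (boolP (has (fun a => (lab a == g) && (S == B a)) (iota 0 N))).
  by case/hasP => a; rewrite mem_iota => ha /andP[/eqP h1 /eqP h2]; exists a.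
move/hasPn => h; rewrite big_seq_cond big1 ?eqxx // => a /andP[ha hl].
by have := h a ha; rewrite hl /= => /negbTE ->.
Qed.

Lemma kdeg_Bk k N d a : (sp d a + d a <= k)%N -> (a < N)%N -> kdeg k (Bk k N d a) = d a.
Proof.
move=> hb ha; rewrite /kdeg card_fset_sum1 -big_fset_condE /Bk.
rewrite (perm_big _ (seq_fset_perm tt _)) undup_id; last first.
  rewrite cat_uniq iota_uniq /Hseq; case: (odd (d a)) => //=; rewrite andbT mem_iota; apply/negP; lia.
rewrite big_cat /= sum1_count /Hseq.
have -> : (\sum_(i <- (if odd (d a) then [:: (k + N - a)%N] else [::]) | (i < k)%N) 1 = 0)%N.
  case: (odd (d a)); rewrite ?big_nil // big_cons big_nil /=; case: ifP => //; lia.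
rewrite addn0 /Lseq -{2}(size_iota (sp d a) (d a)) -count_predT; apply: eq_in_count => x.
rewrite mem_iota /= => hx; lia.
Qed.

Lemma Kc_neq0 (F : fieldType) p : (p \in [pchar F])%R -> forall hs : seq (nat * nat),
  (forall h, h \in hs -> (count_mem h hs < p)%N) -> Kc F hs != 0%R.
Proof.
move=> hp; elim => [|h hs IH] hc /=; first exact: oner_neq0.
rewrite mulf_neq0 //.
  rewrite -(dvdn_pcharf hp); apply/negP => /dvdn_leq.
  have := hc h (mem_head _ _); rewrite /= eqxx /=; move=> h1 h2.
  have := h2 (ltn0Sn _); lia.
apply: IH => h' hh'; apply: leq_ltn_trans (hc h' _); last by rewrite inE hh' orbT.
by rewrite /= leq_addl.
Qed.

Lemma sum_bool_count (T : Type) (s : seq T) (P : pred T) : (\sum_(x <- s) (P x : nat))%N = count P s.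
Proof. by elim: s => [|x s IH]; rewrite ?big_nil ?big_cons ?IH. Qed.

Local Close Scope fset_scope.
Unset Implicit Arguments. Set Strict Implicit.
Local Open Scope ring_scope.

Theorem mainTheorem7 (F : fieldType) (p : nat)
  (F_infinite : forall s : seq F, exists x : F, x \notin s)
  (charF : p \in [pchar F]) (p_gt2 : (2 < p)%N)
  (k : nat) (k_gt0 : (0 < k)%N)
  (l : nat -> nat) (r : nat -> nat -> nat)
  (hdeg : (\sum_(1 <= i < k.+1) i * \sum_(0 <= t < l i) r i t <= k)%N)
  (hp : forall i t, (1 <= i <= k)%N -> (t < l i)%N -> (r i t < p)%N) :
  exists v : nat -> nat -> grass F,
    (forall i t, (1 <= i <= k)%N -> (t < l i)%N -> grass_hom k i (v i t)) /\
    eval_monomial k l r v <> grass_zero F.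
Proof.
pose gs := gsl k l r; pose N := size gs; pose lab := fun a => nth (0%N, 0%N) gs a.
pose d := fun a => (lab a).1; pose B := Bk k N d.
have hd1 : forall a, (a < N)%N -> (0 < d a)%N.
  move=> a ha; have := @mem_gs k l r (lab a).1 (lab a).2.
  rewrite -surjective_pairing mem_nth // => /(_ isT) [/andP[h _] _]; exact: h.
have htot : (sp d N <= k)%N.
  apply: leq_trans hdeg; rewrite -sum_gs /sp /d /lab.
  by rewrite (big_nth (0%N, 0%N)).
exists (fun i t => vv F N lab B (i, t)); split.
  move=> i t hi ht; split.
    exists (map B (iota 0 N)) => S /vv_supp [a [ha [_ ->]]].
    by apply: map_f; rewrite mem_iota.
  move=> S /vv_supp [a [ha [hl ->]]].
  rewrite kdeg_Bk //; first by rewrite /d hl.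
  exact: (Bk_bound htot ha).
have -> : eval_monomial k l r (fun i t => vv F N lab B (i, t)) =
          grass_prod (map (vv F N lab B) gs).
  rewrite /eval_monomial /gs /gsl map_flatten -map_comp; congr (grass_prod (flatten _)).
  apply: eq_map => i /=; rewrite map_flatten -map_comp; congr flatten.
  by apply: eq_map => t /=; rewrite map_nseq.
pose U := seq_fset tt (flatten [seq Lseq d a ++ Hseq k N d a | a <- iota 0 N]).
have hBU : forall a, (a < N)%N -> (B a `<=` U)%fset.
  move=> a ha; apply/fsubsetP => y; rewrite /B /Bk /U !seq_fsetE => hy.
  by apply/flattenP; exists (Lseq d a ++ Hseq k N d a) => //; apply: map_f; rewrite mem_iota.
have hv : valid N lab B U gs.
  split.
    move=> x; rewrite /U seq_fsetE => /flattenP [s /mapP [a ha ->] hx].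
    rewrite mem_iota in ha; exists a; split => //; split; first exact: hBU.
    by rewrite /B /Bk seq_fsetE.
  move=> g; rewrite /cnt big_seq.
  rewrite (eq_bigr (fun b => (lab b == g) : nat)); last first.
    by move=> b; rewrite mem_iota => hb; rewrite hBU // andbT.
  rewrite -big_seq sum_bool_count.
  have -> : count (fun b => lab b == g) (iota 0 N) = count (pred1 g) (map lab (iota 0 N)).
    by rewrite count_map.
  congr count.
  exact: (mkseq_nth (0%N, 0%N) gs).
have := proj1 (main_coef F lab (disj_Bk htot) (ne_Bk k hd1) (inv_Bk htot) gs U) hv.
move=> e hz; move: e; rewrite hz /grass_zero => /esym /eqP.
apply/negP; apply: (Kc_neq0 charF) => -[i t] hit.
have [hi ht] := mem_gs hit; rewrite count_gs //; exact: hp.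
Qed.
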